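(* For all non-negative integers $m$ and $n$, $$\sum_{k=1}^nH_k\sum_{j=m}^k\binom{k-1}{j-1}\frac{s(j,m)}{j!}=\frac{1}{m!}H_n(m)H_n-\frac{1}{m!}\sum_{k=1}^n\frac{H_{k-1}(m)}{k}.$$
   Context: For integers $m\ge 1$, $n\ge 0$, the multiple harmonic-like numbers are $H_n(m)=\sum_{1\le k_1+k_2+\cdots+k_m\le n}\frac{1}{k_1k_2\cdots k_m}$ (sum over positive integers $k_1,\dots,k_m$), with $H_n(0)=1$ for $n\ge 0$ and $H_0(m)=0$ for $m\ge1$. $H_n=H_n(1)=\sum_{k=1}^n\frac1k$. The (signed) Stirling numbers of the first kind $s(n,k)$ are defined by $\sum_{n\ge k}s(n,k)\frac{z^n}{n!}=\frac{\ln^k(1+z)}{k!}$, with $s(n,k)=0$ for $n<k$. Binomial coefficients with negative lower index are $0$. *)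

(* Defs.v *)
From HB Require Import structures.
From mathcomp Require Import all_boot all_order all_algebra.
Set Implicit Arguments. Unset Strict Implicit. Unset Printing Implicit Defensive.
Import Order.TTheory GRing.Theory Num.Theory.
Local Open Scope ring_scope.

(* Signed Stirling numbers of the first kind s(n,k), via the standard
   recurrence s(n+1,k+1) = s(n,k) - n s(n,k+1), s(0,0)=1, s(0,k+1)=s(n+1,0)=0,
   which is equivalent to the generating function
   sum_{n>=k} s(n,k) z^n/n! = ln^k(1+z)/k!. *)
Fixpoint stirling1 (n k : nat) : int :=
  match n, k with
  | 0, 0 => 1
  | 0, _.+1 => 0
  | _.+1, 0 => 0
  | n'.+1, k'.+1 => stirling1 n' k' - (n'%:Z) * stirling1 n' k'.+1
  end.

Definition harm (n : nat) : rat := \sum_(1 <= k < n.+1) (k%:R)^-1.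

(* Multiple harmonic-like numbers
   H_n(m) = sum_{1 <= k_1+...+k_m <= n, k_i >= 1} 1/(k_1...k_m),
   with H_n(0) = 1. Each k_i is at most n, so tuples range over 'I_n.+1. *)
Definition mharm (n m : nat) : rat :=
  if m == 0%N then 1 else
  \sum_(t : m.-tuple 'I_n.+1 |
          [&& all (fun i : 'I_n.+1 => (0 < i)%N) t,
              (1 <= \sum_(i <- t) (i : nat))%N &
              (\sum_(i <- t) (i : nat) <= n)%N])
     (\prod_(i <- t) ((i : nat)%:R : rat))^-1.

(* Binomial coefficient binom(a, b) with integer lower index b = j - 1:
   zero when j = 0 (negative lower index). *)
Definition binom_m1 (a j : nat) : nat := if j == 0%N then 0%N else 'C(a, j.-1).

(* Main.v *)
Require Import Defs.
From mathcomp Require Import all_boot all_order all_algebra.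
From mathcomp Require Import zify ring lra.
Import Order.TTheory GRing.Theory Num.Theory.
Local Open Scope ring_scope.

Fixpoint lah (k j : nat) : nat :=
  match k, j with
  | 0, 0 => 1%N
  | 0, _.+1 => 0%N
  | _.+1, 0 => 0%N
  | k'.+1, j'.+1 => (lah k' j' + (k' + j'.+1) * lah k' j'.+1)%N
  end.

Lemma lahS k j : lah k.+1 j.+1 = (lah k j + (k + j.+1) * lah k j.+1)%N.
Proof. by []. Qed.

Lemma lah_small k j : (k < j)%N -> lah k j = 0%N.
Proof.
elim: k j => [|k IH] [|j] //= H.
by rewrite !IH //; lia.
Qed.

Lemma stir_small n k : (n < k)%N -> stirling1 n k = 0.
Proof.
elim: n k => [|n IH] [|k] //= H.
by rewrite !IH // ?mulr0 ?subr0 //; lia.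
Qed.

Lemma binom_aux k j :
  (j.+1 * binom_m1 k j + (k + j.+2) * 'C(k, j) = k.+2 * 'C(k.+1, j))%N.
Proof.
case: j => [|j]; first by rewrite /binom_m1 /= bin0 bin0; lia.
rewrite /binom_m1 /= binS.
have := mul_bin_left k j.
case: (leqP j k) => hjk.
  move=> h. nia.
rewrite (bin_small hjk) bin_small; lia.
Qed.

Lemma lah_closed k j : (lah k.+1 j * j`! = binom_m1 k j * k.+1`!)%N.
Proof.
elim: k j => [|k IH] [|j] //.
  case: j => [|j] //=. rewrite /binom_m1 /= bin_small //; lia.
rewrite lahS mulnDl.
have -> : (lah k.+1 j * (j.+1)`! = j.+1 * (binom_m1 k j * (k.+1)`!))%N by rewrite factS mulnCA IH.
have -> : ((k.+1 + j.+1) * lah k.+1 j.+1 * (j.+1)`! = (k.+1+j.+1) * (binom_m1 k j.+1 * (k.+1)`!))%N by rewrite -mulnA IH.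
rewrite [(k.+2)`!]factS.
have h := binom_aux k j.
rewrite [binom_m1 k j.+1]/binom_m1 [binom_m1 k.+1 j.+1]/binom_m1 /=.
move: h; rewrite /binom_m1 /=.
move: (if j == 0%N then 0%N else 'C(k, j.-1)) ('C(k,j)) ('C(k.+1,j)) ((k.+1)`!) => a b c F h.
rewrite [in RHS]mulnCA [in RHS]mulnA -h. nia.
Qed.
Fixpoint R (m n : nat) : rat :=
  if m is m'.+1 then \sum_(1 <= i < n.+1) R m' (n - i)%N / i%:R else 1.

Lemma RS m n : R m.+1 n = \sum_(1 <= i < n.+1) R m (n - i)%N / i%:R.
Proof. by []. Qed.

Lemma R0 n : R 0 n = 1.
Proof. by []. Qed.

Arguments R : simpl never.

Lemma tri (f g : nat -> rat) n :
 \sum_(0 <= q < n) \sum_(1 <= i < q.+1) f i * g (q - i)%N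
 = \sum_(1 <= i < n.+1) f i * \sum_(0 <= l < (n - i)%N) g l.
Proof.
elim: n => [|n IH]; first by rewrite !big_geq.
rewrite big_nat_recr //= IH.
rewrite [RHS]big_nat_recr //= subnn big_mkord big_ord0 mulr0 addr0.
rewrite -big_split /=; apply: eq_big_nat => i /andP[h1 h2].
rewrite subSn; last by lia.
by rewrite big_nat_recr //= mulrDr.
Qed.

Lemma revsum (G : nat -> rat) n :
  \sum_(1 <= i < n.+1) G (n - i)%N = \sum_(0 <= l < n) G l.
Proof.
elim: n => [|n IH]; first by rewrite !big_geq.
rewrite big_nat_recl // subSS subn0 [RHS]big_nat_recr //= -IH addrC.
congr (_ + _); apply: eq_bigr => i _; by rewrite subSS.
Qed.

Lemma conv_step m q :
  \sum_(1 <= i < q.+1) i%:R^-1 * (R m.+1 (q - i)%N + (m.+1)%:R * R m (q - i)%N)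
  = R m.+2 q + (m.+1)%:R * R m.+1 q.
Proof.
rewrite [R m.+2 q]RS [R m.+1 q]RS mulr_sumr -big_split /=.
by apply: eq_bigr => i _; ring.
Qed.

Lemma Pp m n : n%:R * R m.+1 n = \sum_(0 <= l < n) (R m.+1 l + (m.+1)%:R * R m l).
Proof.
elim: m n => [|m IH] n.
  elim: n => [|n IHn]; first by rewrite big_geq // mul0r.
  rewrite big_nat_recr //= -IHn !RS big_nat_recr //= !R0.
  have hn : ((n.+1)%:R : rat) != 0 by rewrite pnatr_eq0.
  set S := \sum_(1 <= i < n.+1) _.
  rewrite -addn1 natrD. rewrite -addn1 natrD in hn. field.
  exact: hn.
rewrite RS mulr_sumr.
rewrite (eq_big_nat _ _ (F2 := fun i => R m.+1 (n-i)%N + i%:R^-1 * \sum_(0<=l<(n-i)%N) (R m.+1 l + (m.+1)%:R * R m l))); last first.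
  move=> i /andP[h1 h2]; rewrite -IH.
  have -> : (n%:R : rat) = i%:R + (n-i)%N%:R by rewrite -natrD subnKC //; lia.
  have hi : (i%:R : rat) != 0 by rewrite pnatr_eq0; lia.
  by field.
rewrite big_split /= (revsum (R m.+1)).
have T := tri (fun i => i%:R^-1) (fun l => R m.+1 l + (m.+1)%:R * R m l) n.
cbv beta in T; rewrite -T.
rewrite -big_split; apply: eq_bigr => q _.
rewrite conv_step [(m.+2)%:R]mulrS /=. ring.
Qed.

Lemma Dstep m n : (n.+1)%:R * (R m.+1 n.+1 - R m.+1 n) = (m.+1)%:R * R m n.
Proof.
have := Pp m n.+1; rewrite big_nat_recr //= -Pp => h.
rewrite mulrBr h -addn1 natrD. ring.
Qed.

Lemma stirS j m : ((stirling1 j.+1 m.+1)%:~R : rat) =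
  (stirling1 j m)%:~R - j%:R * (stirling1 j m.+1)%:~R.
Proof. by rewrite /= intrB intrM. Qed.

Arguments stirling1 : simpl never.

Definition F k m : rat :=
  \sum_(0 <= j < k.+1) (lah k j)%:R * (stirling1 j m)%:~R.

Definition D k m : rat := if k is k'.+1 then R m k - R m k' else R m 0.

Definition G k m : rat := (k`!)%:R / (m`!)%:R * D k m.

Lemma shift_sum (g : nat -> rat) k : g 0%N = 0 -> g k.+1 = 0 ->
  \sum_(0 <= j < k.+1) g j.+1 = \sum_(0 <= j < k.+1) g j.
Proof.
move=> h0 hk.
transitivity (\sum_(0 <= j < k.+2) g j).
  by rewrite [RHS]big_nat_recl // h0 add0r.
by rewrite big_nat_recr //= hk addr0.
Qed.

Lemma F0 m : F 0 m = (m == 0%N)%:R.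
Proof. by rewrite /F big_nat1; case: m. Qed.

Lemma Fk0 k : F k.+1 0 = 0.
Proof.
rewrite /F big1_seq // => -[|j] _ /=; first by rewrite mul0r.
by rewrite mulr0.
Qed.

Lemma FS k m : F k.+1 m.+1 = F k m + k%:R * F k m.+1.
Proof.
rewrite /F big_nat_recl // mul0r add0r.
under eq_bigr => j _ do rewrite lahS natrD mulrDl.
rewrite big_split /=.
have E : \sum_(0 <= j < k.+1) ((k + j.+1) * lah k j.+1)%N%:R * ((stirling1 j.+1 m.+1)%:~R : rat)
  = \sum_(0 <= j < k.+1) ((k + j) * lah k j)%N%:R * (stirling1 j m.+1)%:~R.
  apply: (shift_sum (fun j => ((k + j) * lah k j)%N%:R * (stirling1 j m.+1)%:~R)).
    by rewrite /= mulr0.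
  by rewrite lah_small // muln0 mul0r.
rewrite E.
rewrite mulr_sumr -!big_split /=; apply: eq_bigr => j _.
rewrite stirS natrM natrD. ring.
Qed.

Lemma nfact_neq0 n : ((n`!)%:R : rat) != 0.
Proof. by rewrite pnatr_eq0 -lt0n fact_gt0. Qed.

Lemma nS_neq0 n : ((n.+1)%:R : rat) != 0.
Proof. by rewrite pnatr_eq0. Qed.

Lemma G0 m : G 0 m = (m == 0%N)%:R.
Proof.
rewrite /G /D; case: m => [|m]; first by rewrite R0 mulr1 divr1.
by rewrite RS big_geq // mulr0.
Qed.

Lemma Gk0 k : G k.+1 0 = 0.
Proof. by rewrite /G /D !R0 subrr mulr0. Qed.

Lemma GS k m : G k.+1 m.+1 = G k m + k%:R * G k m.+1.
Proof.
have hm := nfact_neq0 m. have hm1 := nS_neq0 m.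
case: k => [|k].
  have h := Dstep m 0. rewrite mul1r in h.
  rewrite /G /D h mul0r addr0 [(m.+1)`!]factS natrM.
  move: (m.+1)%:R hm1 (m`!)%:R hm => a ha b hb.
  by field; rewrite ha hb.
have h := Dstep m k.+1. have h2 := Dstep m k.
have e1 : R m.+1 k.+2 - R m.+1 k.+1 = (m.+1)%:R * R m k.+1 / (k.+2)%:R.
  rewrite -h; move: (k.+2)%:R (nS_neq0 k.+1) => a ha.
  by field; rewrite ha.
have e2 : R m.+1 k.+1 - R m.+1 k = (m.+1)%:R * R m k / (k.+1)%:R.
  rewrite -h2; move: (k.+1)%:R (nS_neq0 k) => a ha.
  by field; rewrite ha.
have hk := nfact_neq0 k. have hk1 := nS_neq0 k. have hk2 := nS_neq0 k.+1.
rewrite /G /D e1 e2 !factS !natrM.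
move: (m.+1)%:R hm1 (m`!)%:R hm (k.+2)%:R hk2 (k.+1)%:R hk1 (k`!)%:R hk => a ha b hb c hc d hd e he.
by field; rewrite ?ha ?hb ?hc ?hd ?he.
Qed.

Lemma FG k m : F k m = G k m.
Proof.
elim: k m => [|k IH] m; first by rewrite F0 G0.
case: m => [|m]; first by rewrite Fk0 Gk0.
by rewrite FS GS !IH.
Qed.

Lemma widen0 (f : nat -> rat) m N : (forall j, (j < m)%N -> f j = 0) ->
  \sum_(m <= j < N) f j = \sum_(0 <= j < N) f j.
Proof.
move=> hf; case: (leqP m N) => h.
  rewrite [RHS](@big_cat_nat _ _ _ m 0 N) //=.
  rewrite [X in _ = X + _]big1_seq ?add0r // => j /andP[_].
  by rewrite mem_index_iota => /andP[_ hj]; apply: hf.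
rewrite big_geq ?(ltnW h) // big1_seq // => j /andP[_].
rewrite mem_index_iota => /andP[_ hj]; apply: hf.
exact: ltn_trans hj h.
Qed.

Lemma inner_eq k m :
  \sum_(m <= j < k.+2) ((binom_m1 k j)%:R * ((stirling1 j m)%:~R : rat) / (j`!)%:R)
  = (R m k.+1 - R m k) / (m`!)%:R.
Proof.
rewrite widen0; last by move=> j hj; rewrite stir_small // mulr0 mul0r.
transitivity (F k.+1 m / (k.+1)`!%:R).
  rewrite /F mulr_suml; apply: eq_bigr => j _.
  have h : ((lah k.+1 j)%:R * (j`!)%:R : rat) = (binom_m1 k j)%:R * ((k.+1)`!)%:R.
    by rewrite -!natrM lah_closed.
  have hj := nfact_neq0 j. have hk := nfact_neq0 k.+1.
  have hb : (binom_m1 k j)%:R = (lah k.+1 j)%:R * (j`!)%:R / (k.+1)`!%:R :> rat.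
    rewrite h; move: ((k.+1)`!)%:R hk => a ha.
    by field; rewrite ?ha.
  rewrite hb; move: ((k.+1)`!)%:R hk (j`!)%:R hj => a ha b hb'.
  by field; rewrite ?ha ?hb'.
rewrite FG /G /D.
move: ((k.+1)`!)%:R (nfact_neq0 k.+1) (m`!)%:R (nfact_neq0 m) => a ha b hb.
by field; rewrite ?ha ?hb.
Qed.

Lemma sbp (r : nat -> rat) c n :
  \sum_(1 <= k < n.+1) harm k * ((r k - r k.-1) * c)
  = c * r n * harm n - c * \sum_(1 <= k < n.+1) r k.-1 / k%:R.
Proof.
elim: n => [|n IH].
  by rewrite !big_geq // /harm big_geq // !mulr0 subrr.
rewrite big_nat_recr //= IH [in RHS]big_nat_recr //=.
have -> : harm n.+1 = harm n + (n.+1)%:R^-1 by rewrite /harm big_nat_recr.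
ring.
Qed.

Definition T (N m n : nat) : rat :=
  \sum_(t : m.-tuple 'I_N | all (fun i : 'I_N => (0 < i)%N) t
                             && (\sum_(i <- t) (i : nat) <= n)%N)
     (\prod_(i <- t) ((i : nat)%:R : rat))^-1.

Lemma T0 N n : T N 0 n = 1.
Proof.
rewrite /T (big_pred1 [tuple]) /=; first by rewrite big_nil invr1.
move=> t; rewrite tuple0 /= big_nil. by rewrite eqxx.
Qed.

Lemma TS N m n : T N m.+1 n =
  \sum_(i : 'I_N | (0 < i)%N && (i <= n)%N) ((i : nat)%:R)^-1 * T N m (n - i)%N.
Proof.
rewrite /T.
rewrite (reindex (fun p : 'I_N * m.-tuple 'I_N => [tuple of p.1 :: p.2])) /=; last first.
  exists (fun t : m.+1.-tuple 'I_N => (thead t, [tuple of behead t])) => [[x t] _ | t _] /=.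
    by congr (_, _); apply: val_inj.
  by case/tupleP: t => x t; apply: val_inj.
rewrite (eq_big (fun p : 'I_N * m.-tuple 'I_N => ((0 < p.1)%N && (p.1 <= n)%N) &&
     (all (fun i : 'I_N => (0 < i)%N) p.2 && (\sum_(i <- p.2) (i : nat) <= n - p.1)%N))
   (fun p : 'I_N * m.-tuple 'I_N => ((p.1 : nat)%:R)^-1 * (\prod_(i <- p.2) ((i : nat)%:R : rat))^-1)).
- rewrite -(pair_big_dep (fun i : 'I_N => (0 < i)%N && (i <= n)%N)
     (fun i (t : m.-tuple 'I_N) => all (fun i : 'I_N => (0 < i)%N) t && (\sum_(i0 <- t) (i0 : nat) <= n - i)%N)
     (fun (i : 'I_N) (t : m.-tuple 'I_N) => ((i : nat)%:R)^-1 * (\prod_(i0 <- t) ((i0 : nat)%:R : rat))^-1)).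
  by apply: eq_bigr => i _; rewrite mulr_sumr.
- move=> [x t] /=; rewrite big_cons.
  case: (0 < x)%N; case: (all _ t); rewrite /= ?andbF //.
  case: (leqP x n) => h.
    by rewrite leq_subRL.
  apply/negbTE; rewrite -ltnNge; exact: (leq_trans h (leq_addr _ _)).
- by move=> [x t] /= _; rewrite big_cons invfM.
Qed.


Lemma sum1_shift (f : nat -> rat) n :
  \sum_(1 <= i < n.+1) f i = \sum_(0 <= i < n.+1 | (0 < i)%N) f i.
Proof.
rewrite [LHS]big_add1 [RHS]big_mkcond /= [RHS]big_nat_recl // add0r.
by apply: eq_bigr.
Qed.

Lemma TR N m n : (n < N)%N -> T N m n = R m n.
Proof.
elim: m n => [|m IH] n hn; first by rewrite T0 R0.
rewrite TS RS.
rewrite (eq_bigr (fun i : 'I_N => ((i : nat)%:R)^-1 * R m (n - i)%N)); last first.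
  by move=> i _; rewrite IH //; apply: leq_ltn_trans (leq_subr _ _) hn.
rewrite -(big_mkord (fun i => (0 < i)%N && (i <= n)%N) (fun i => (i%:R)^-1 * R m (n - i)%N)).
rewrite (eq_bigl (fun i => (0 < i)%N && (i < n.+1)%N)) //.
rewrite -(big_nat_widen 0 n.+1 N (fun i => (0 < i)%N)) //.
rewrite sum1_shift; apply: eq_bigr => i _; by rewrite mulrC.
Qed.

Lemma mharm_R n m : mharm n m = R m n.
Proof.
case: m => [|m]; first by rewrite /mharm R0.
rewrite /mharm /= -(@TR n.+1 m.+1 n (ltnSn n)) /T.
apply: eq_bigl => t.
case/tupleP: t => x t; rewrite big_cons /=.
case: x => [[|x] hx] //=.
Qed.

Theorem theorem6 (m n : nat) :
  \sum_(1 <= k < n.+1)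
     harm k * \sum_(m <= j < k.+1)
        ((binom_m1 k.-1 j)%:R * ((stirling1 j m)%:~R : rat) / (j`!)%:R)
  = ((m`!)%:R)^-1 * mharm n m * harm n
    - ((m`!)%:R)^-1 * \sum_(1 <= k < n.+1) mharm k.-1 m / k%:R.
Proof.
rewrite mharm_R.
have -> : \sum_(1 <= k < n.+1) mharm k.-1 m / k%:R = \sum_(1 <= k < n.+1) R m k.-1 / k%:R by apply: eq_bigr => k _; rewrite mharm_R.
rewrite -sbp.
apply: eq_big_nat => k /andP[hk _].
case: k hk => [|k] // _.
by rewrite inner_eq.
Qed.
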